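(* Let $X_1,\dots,X_n$ be i.i.d. sub-Gaussian random vectors in $\mathbb{R}^d$ with mean zero, covariance $I$ and $O(1)$ sub-Gaussian constant, and let $\nabla^2L_n(\alpha)=\sum_{i=1}^n\beta_i(\alpha)X_iX_i^\top$ with $\beta_i(\alpha)=\sigma(\langle\alpha,X_i\rangle)(1-\sigma(\langle\alpha,X_i\rangle))$. Then for every $\alpha\in\mathbb{R}^d$, $\mathbb{E}\nabla^2L_n(\alpha)\succeq n\cdot e^{-O(\|\alpha\|_2)}\cdot I$.
   Context: $\sigma(z)=1/(1+e^{-z})$; the constant in $O(\cdot)$ depends only on the sub-Gaussian constant. *)

(* Defs.v *)
From HB Require Import structures.
From mathcomp Require Import all_boot all_order all_algebra.
From mathcomp Require Import all_classical all_reals all_analysis.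

Unset Printing Implicit Defensive.

Import Order.TTheory GRing.Theory Num.Theory.
Local Open Scope classical_set_scope.
Local Open Scope ring_scope.

Definition sigmoid {R : realType} (z : R) : R := 1 / (1 + expR (- z)).

Definition dotv {R : realType} {d : nat} (u v : 'I_d -> R) : R :=
  \sum_(j < d) u j * v j.
Definition norm2 {R : realType} {d : nat} (u : 'I_d -> R) : R :=
  Num.sqrt (dotv u u).

Definition psd {R : realType} {d : nat} (A : 'M[R]_d) : Prop :=
  forall v : 'I_d -> R, 0 <= \sum_(j < d) \sum_(k < d) v j * A j k * v k.
Definition loewner_ge {R : realType} {d : nat} (A B : 'M[R]_d) : Prop :=
  psd (A - B).

(** Borel sigma-algebra of R^d = product sigma-algebra, generated by the
    coordinate preimages of Borel sets of R. *)
Definition coord_cylinders {R : realType} (d : nat) : set (set ('I_d -> R)) :=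
  [set A | exists (j : 'I_d) (B : set R), measurable B /\
           A = (fun x : 'I_d -> R => x j) @^-1` B].
Definition borelRd {R : realType} (d : nat) : set (set ('I_d -> R)) :=
  <<s (coord_cylinders d) >>.

Section random_vectors.
Context {dT : measure_display} {T : measurableType dT} {R : realType}.

Definition random_vector {d : nat} (X : T -> 'I_d -> R) : Prop :=
  forall j : 'I_d, measurable_fun setT (fun w => X w j).

Definition independent_rvecs (P : probability T R) {n d : nat}
    (X : 'I_n -> T -> 'I_d -> R) : Prop :=
  forall A : 'I_n -> set T,
    (forall i, exists2 B, borelRd d B & A i = X i @^-1` B) ->
    (P (\bigcap_(i in [set: 'I_n]) A i) = \prod_(i < n) P (A i))%E.

Definition identically_distributed (P : probability T R) {n d : nat}
    (X : 'I_n -> T -> 'I_d -> R) : Prop :=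
  forall (i i' : 'I_n) (B : set ('I_d -> R)), borelRd d B ->
    P (X i @^-1` B) = P (X i' @^-1` B).

Definition iid_rvecs (P : probability T R) {n d : nat}
    (X : 'I_n -> T -> 'I_d -> R) : Prop :=
  (forall i, random_vector (X i)) /\ independent_rvecs P X /\
  identically_distributed P X.

Definition mean_zero (P : probability T R) {d : nat} (Y : T -> 'I_d -> R) :=
  forall j : 'I_d, ('E_P[fun w => Y w j] = 0)%E.

(** covariance identity: E[Y Y^T] = I (together with mean zero) *)
Definition cov_identity (P : probability T R) {d : nat} (Y : T -> 'I_d -> R) :=
  forall j k : 'I_d, ('E_P[fun w => (Y w j * Y w k)%R] = ((j == k)%:R)%:E)%E.

(** sub-Gaussian with constant K (psi_2 norm of every one-dimensional
    marginal <u,Y>, |u|=1, is at most K):  E exp(<u,Y>^2/K^2) <= 2 *)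
Definition subgaussian (P : probability T R) {d : nat} (K : R)
    (Y : T -> 'I_d -> R) : Prop :=
  forall u : 'I_d -> R, norm2 u = 1 ->
    ('E_P[fun w => (expR ((dotv u (Y w)) ^+ 2 / K ^+ 2))%R] <= 2%:E)%E.

Definition beta_weight {d : nat} (alpha x : 'I_d -> R) : R :=
  sigmoid (dotv alpha x) * (1 - sigmoid (dotv alpha x)).

Definition hessian_Ln {n d : nat} (X : 'I_n -> T -> 'I_d -> R)
    (alpha : 'I_d -> R) (w : T) : 'M[R]_d :=
  \matrix_(j, k) \sum_(i < n) beta_weight alpha (X i w) * X i w j * X i w k.

Definition expected_hessian (P : probability T R) {n d : nat}
    (X : 'I_n -> T -> 'I_d -> R) (alpha : 'I_d -> R) : 'M[R]_d :=
  \matrix_(j, k) fine ('E_P[fun w => hessian_Ln X alpha w j k]).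

End random_vectors.

(* Main.v *)
Require Import Defs.
From HB Require Import structures.
From mathcomp Require Import all_boot all_order all_algebra.
From mathcomp Require Import all_classical all_reals all_analysis.
From mathcomp Require Import ring lra.

Import Order.TTheory GRing.Theory Num.Theory numFieldNormedType.Exports.
Local Open Scope classical_set_scope.
Local Open Scope ring_scope.

Section beta.
Context {R : realType}.

Definition bfun (t : R) : R := sigmoid t * (1 - sigmoid t).

Lemma sigmoid_cont : continuous (fun t : R => sigmoid t).
Proof.
move=> x; rewrite /sigmoid.
have h : {for x, continuous (fun z : R => (1 + expR (- z))^-1)}.
  apply: continuousV.
    by rewrite gt_eqF // ltr_pwDr ?expR_gt0.
  apply: continuousD; first exact: cst_continuous.
  apply: (continuous_comp (f := fun z : R => - z)); first exact: continuousN.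
  exact: continuous_expR.
by rewrite (_ : (fun t : R => 1 / (1 + expR (- t))) = (fun z : R => (1 + expR (- z))^-1)) //; apply/funext => z; rewrite div1r.
Qed.

Lemma bfun_cont : continuous (fun t : R => bfun t).
Proof.
move=> x; apply: continuousM; first exact: sigmoid_cont.
apply: continuousB; first exact: cst_continuous.
exact: sigmoid_cont.
Qed.

Lemma sigmoidE (t : R) : sigmoid t = (1 + expR (- t))^-1.
Proof. by rewrite /sigmoid div1r. Qed.

Lemma bfun_bounds (t : R) : 0 <= bfun t <= 1.
Proof.
rewrite /bfun sigmoidE.
set q := (1 + expR (- t))^-1.
have e0 := expR_gt0 (- t).
have q0 : 0 < q by rewrite invr_gt0; lra.
have hq : q * (1 + expR (- t)) = 1 by rewrite mulVf // gt_eqF //; lra.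
apply/andP; split; nra.
Qed.

Lemma bfun_lower (t : R) : expR (- `|t|) / 4 <= bfun t.
Proof.
rewrite /bfun sigmoidE.
set e := expR (- t).
set q := (1 + e)^-1.
have e0 : 0 < e := expR_gt0 (- t).
have q0 : 0 < q by rewrite invr_gt0; lra.
have hq : q * (1 + e) = 1 by rewrite mulVf // gt_eqF //; lra.
have [t0|t0] := lerP 0 t.
  rewrite ger0_norm //.
  have e1 : e <= 1 by rewrite expR_le1; lra.
  have h2 : 1 <= 2 * q by nra.
  have h3 : 1 - q = q * e by lra.
  rewrite h3.
  have h4 : 1 / 4 <= q * q by nra.
  have h5 : 0 <= e * (q * q - 1 / 4) by apply: mulr_ge0; lra.
  have h6 : q * (q * e) - e / 4 = e * (q * q - 1 / 4) by ring.
  rewrite -/e; lra.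
rewrite ltr0_norm // opprK.
have hf : expR t * e = 1 by rewrite /e -expRD subrr expR0.
have e1 : 1 <= e by rewrite /e -expR0 ler_expR; lra.
have f0 := expR_gt0 t.
have h2 : 1 <= 2 * e * q by nra.
have h3 : 1 - q = q * e by lra.
rewrite h3.
have h4 : 1 / 4 <= (e * q) * (e * q) by nra.
have h5 : q * (q * e) = expR t * ((e * q) * (e * q)).
  by rewrite -[X in X = _]mul1r -hf; ring.
rewrite h5.
have h6 : 0 <= expR t * ((e * q) * (e * q) - 1 / 4) by apply: mulr_ge0; lra.
have h7 : expR t * ((e * q) * (e * q)) - expR t / 4 = expR t * ((e * q) * (e * q) - 1 / 4) by ring.
lra.
Qed.

Lemma key_pointwise (s M a b : R) : 0 <= s -> 0 < M ->
  expR (- (M * s)) / 4 * (b ^+ 2 - (b ^+ 4 + a ^+ 4) / (2 * M ^+ 2))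
    <= bfun (s * a) * b ^+ 2.
Proof.
move=> s0 M0.
have E0 := expR_gt0 (- (M * s)).
have M2 : 0 < 2 * M ^+ 2 by rewrite mulr_gt0 // exprn_gt0.
have [aM|aM] := lerP `|a| M.
  have h1 : expR (- (M * s)) / 4 <= bfun (s * a).
    apply: le_trans (bfun_lower _).
    rewrite ler_pM2r // ler_expR lerN2 normrM (ger0_norm s0) mulrC.
    by rewrite ler_wpM2r.
  have h2 : 0 <= (b ^+ 4 + a ^+ 4) / (2 * M ^+ 2).
    by rewrite divr_ge0 ?addr_ge0 ?exprn_even_ge0 // ltW.
  have hb := sqr_ge0 b.
  have := bfun_bounds (s * a) => /andP[b0 _].
  have h3 : expR (- (M * s)) / 4 * (b ^+ 2 - (b ^+ 4 + a ^+ 4) / (2 * M ^+ 2))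
     <= expR (- (M * s)) / 4 * b ^+ 2.
    rewrite ler_pM2l ?divr_gt0 //; lra.
  by apply: le_trans h3 _; apply: ler_wpM2r.
have := bfun_bounds (s * a) => /andP[b0 _].
apply: le_trans (mulr_ge0 b0 (exprn_even_ge0 _ _)) => //.
apply: mulr_ge0_le0; first by rewrite divr_ge0 // ltW.
suff hX : b ^+ 2 <= (b ^+ 4 + a ^+ 4) / (2 * M ^+ 2) by lra.
rewrite ler_pdivlMr //.
have a2 : M ^+ 2 < a ^+ 2.
  have ha : `|a| ^+ 2 = a ^+ 2 by rewrite real_normK ?num_real.
  rewrite -ha !expr2; nra.
have hb := sqr_ge0 b.
have h : b ^+ 2 * (2 * M ^+ 2) <= 2 * (a ^+ 2 * b ^+ 2).
  have h0 : 0 <= b ^+ 2 * (a ^+ 2 - M ^+ 2) by apply: mulr_ge0 => //; lra.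
  have e0 : 2 * (a ^+ 2 * b ^+ 2) - b ^+ 2 * (2 * M ^+ 2) = 2 * (b ^+ 2 * (a ^+ 2 - M ^+ 2)) by ring.
  lra.
have h' : 2 * (a ^+ 2 * b ^+ 2) <= b ^+ 4 + a ^+ 4.
  have := sqr_ge0 (a ^+ 2 - b ^+ 2).
  have -> : b ^+ 4 = b ^+ 2 * b ^+ 2 by rewrite -exprD.
  have -> : a ^+ 4 = a ^+ 2 * a ^+ 2 by rewrite -exprD.
  move=> h0; nra.
lra.
Qed.

End beta.

Section meas.
Context {dT : measure_display} {T : measurableType dT} {R : realType}
  (P : probability T R).

Lemma EE (f : T -> R) : ('E_P[f] = \int[P]_w (f w)%:E)%E.
Proof. by rewrite unlock. Qed.

Lemma mdot {d : nat} (Y : T -> 'I_d -> R) (u : 'I_d -> R) :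
  random_vector Y -> measurable_fun setT (fun w => dotv u (Y w)).
Proof.
move=> hY; rewrite /dotv; apply: measurable_sum => j.
by apply: measurable_realfun.measurable_funM => //; exact: measurable_cst.
Qed.

Lemma Rint0 : Rintegral P setT (fun _ => 0 : R) = 0.
Proof. by rewrite Rintegral_cst // mul0r. Qed.

Lemma integrable0 : P.-integrable setT (EFin \o (fun _ : T => 0 : R)).
Proof. exact: finite_measure_integrable_cst. Qed.

Lemma Rint_sum (I : Type) (s : seq I) (F : I -> T -> R) :
  (forall i, P.-integrable setT (EFin \o F i)) ->
  Rintegral P setT (fun x => \sum_(i <- s) F i x) =
  \sum_(i <- s) Rintegral P setT (F i).
Proof.
move=> hF; elim: s => [|i s IH].
  rewrite big_nil -[RHS](Rint0); congr Rintegral; apply/funext => x.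
  by rewrite big_nil.
rewrite big_cons -IH.
rewrite -RintegralD //; last first.
  rewrite (_ : _ \o _ = (fun x => \sum_(i <- s) (F i x)%:E)); last first.
    by apply/funext => x /=; rewrite sumEFin.
  by apply: integrable_sum => // j _; exact: hF.
by congr Rintegral; apply/funext => x; rewrite big_cons.
Qed.

Lemma integrable_sumR (I : Type) (s : seq I) (F : I -> T -> R) :
  (forall i, P.-integrable setT (EFin \o F i)) ->
  P.-integrable setT (EFin \o (fun x => \sum_(i <- s) F i x)).
Proof.
move=> hF.
rewrite (_ : _ \o _ = (fun x => \sum_(i <- s) (F i x)%:E)); last first.
  by apply/funext => x /=; rewrite sumEFin.
by apply: integrable_sum => // j _; exact: hF.
Qed.

Lemma int_dom (f g : T -> R) : measurable_fun setT f ->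
  P.-integrable setT (EFin \o g) -> (forall x, `|f x| <= `|g x|) ->
  P.-integrable setT (EFin \o f).
Proof.
move=> mf ig hfg; apply: le_integrable ig => //.
  exact/measurable_realfun.measurable_EFinP.
by move=> x _ /=; rewrite lee_fin.
Qed.

Lemma int_sq (f : T -> R) (r : R) : measurable_fun setT f ->
  ('E_P[fun w => (f w * f w)%R] = r%:E)%E ->
  P.-integrable setT (EFin \o (fun w => f w * f w)).
Proof.
move=> mf; rewrite EE => h; apply/integrableP; split.
  by apply/measurable_realfun.measurable_EFinP; exact: measurable_realfun.measurable_funM.
rewrite (eq_integral (fun w => (f w * f w)%:E)); first by rewrite h ltry.
by move=> x _ /=; rewrite ger0_norm // -expr2 sqr_ge0.
Qed.

Lemma int_mul (f g : T -> R) : measurable_fun setT f -> measurable_fun setT g ->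
  P.-integrable setT (EFin \o (fun w => f w * f w)) ->
  P.-integrable setT (EFin \o (fun w => g w * g w)) ->
  P.-integrable setT (EFin \o (fun w => f w * g w)).
Proof.
move=> mf mg hf hg.
apply: (int_dom (fun w => f w * g w) (fun w => f w * f w + g w * g w)).
- exact: measurable_realfun.measurable_funM.
- rewrite (_ : _ \o _ = ((EFin \o (fun w => (f w * f w)%R)) \+ (EFin \o (fun w => (g w * g w)%R)))%E).
    exact: integrableD.
  by apply/funext.
- move=> x.
  have s1 : 0 <= f x * f x by rewrite -expr2 sqr_ge0.
  have s2 : 0 <= g x * g x by rewrite -expr2 sqr_ge0.
  rewrite (ger0_norm (addr_ge0 s1 s2)) normrM.
  have h := sqr_ge0 (`|f x| - `|g x|).
  have e1 : `|f x| ^+ 2 = f x * f x by rewrite real_normK ?num_real // expr2.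
  have e2 : `|g x| ^+ 2 = g x * g x by rewrite real_normK ?num_real // expr2.
  have e3 : (`|f x| - `|g x|) ^+ 2 = `|f x| ^+ 2 + `|g x| ^+ 2 - 2 * (`|f x| * `|g x|) by ring.
  rewrite e3 e1 e2 in h.
  have := mulr_ge0 (normr_ge0 (f x)) (normr_ge0 (g x)).
  lra.
Qed.

Lemma intZ (f : T -> R) (c : R) : P.-integrable setT (EFin \o f) ->
  P.-integrable setT (EFin \o (fun w => c * f w)).
Proof.
move=> hf; rewrite (_ : _ \o _ = (fun w => c%:E * (EFin \o f) w)%E).
  exact: integrableZl.
by apply/funext => w.
Qed.

Lemma intZr (f : T -> R) (c : R) : P.-integrable setT (EFin \o f) ->
  P.-integrable setT (EFin \o (fun w => f w * c)).
Proof.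
move=> hf; rewrite (_ : (fun w => f w * c) = (fun w => c * f w)).
  exact: intZ.
by apply/funext => w; rewrite mulrC.
Qed.

Lemma quad_id {d : nat} (v x : 'I_d -> R) :
  \sum_(j < d) \sum_(k < d) v j * (x j * x k) * v k = dotv v x ^+ 2.
Proof.
rewrite /dotv expr2 mulr_suml; apply: eq_bigr => j _.
rewrite mulr_sumr; apply: eq_bigr => k _; ring.
Qed.

Lemma Rint_quad {d : nat} (v : 'I_d -> R) (F : 'I_d -> 'I_d -> T -> R) :
  (forall j k, P.-integrable setT (EFin \o F j k)) ->
  \sum_(j < d) \sum_(k < d) v j * Rintegral P setT (F j k) * v k =
  Rintegral P setT (fun w => \sum_(j < d) \sum_(k < d) v j * F j k w * v k).
Proof.
move=> hF.
rewrite Rint_sum; last first.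
  move=> j; apply: integrable_sumR => k.
  by apply: intZr; apply: intZ.
apply: eq_bigr => j _.
rewrite Rint_sum; last by move=> k; apply: intZr; apply: intZ.
apply: eq_bigr => k _.
rewrite (RintegralZr _ (f := fun w => v j * F j k w)) //; last exact: intZ.
by rewrite RintegralZl.
Qed.

Lemma int_quad {d : nat} (v : 'I_d -> R) (F : 'I_d -> 'I_d -> T -> R) :
  (forall j k, P.-integrable setT (EFin \o F j k)) ->
  P.-integrable setT (EFin \o (fun w => \sum_(j < d) \sum_(k < d) v j * F j k w * v k)).
Proof.
move=> hF; apply: integrable_sumR => j; apply: integrable_sumR => k.
by apply: intZr; apply: intZ.
Qed.

Lemma cov_int {d : nat} (Y : T -> 'I_d -> R) :
  random_vector Y -> cov_identity P Y ->
  forall j k, P.-integrable setT (EFin \o (fun w => Y w j * Y w k)).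
Proof.
move=> hY hc j k; apply: int_mul => //.
  exact: (int_sq _ _ (hY j) (hc j j)).
exact: (int_sq _ _ (hY k) (hc k k)).
Qed.

Lemma second_moment {d : nat} (Y : T -> 'I_d -> R) (u : 'I_d -> R) :
  random_vector Y -> cov_identity P Y ->
  P.-integrable setT (EFin \o (fun w => dotv u (Y w) ^+ 2)) /\
  Rintegral P setT (fun w => dotv u (Y w) ^+ 2) = dotv u u.
Proof.
move=> hY hc.
have hF := cov_int Y hY hc.
have -> : (fun w => dotv u (Y w) ^+ 2) =
   (fun w => \sum_(j < d) \sum_(k < d) u j * (fun j k w => Y w j * Y w k) j k w * u k).
  by apply/funext => w; rewrite -quad_id.
split; first exact: int_quad.
rewrite -Rint_quad //.
rewrite /dotv; apply: eq_bigr => j _.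
have hjk : forall k, Rintegral P setT (fun w => Y w j * Y w k) = (j == k)%:R.
  by move=> k; rewrite /Rintegral -EE hc.
under eq_bigr do rewrite hjk.
rewrite (bigD1 j) //= eqxx big1 ?addr0; first by rewrite mulr1.
by move=> k /negbTE; rewrite eq_sym => ->; rewrite mulr0 mul0r.
Qed.

Lemma exp_quad (z : R) : 0 <= z -> z ^+ 2 <= 4 * expR z.
Proof.
move=> z0.
have h1 : expR z = expR (z / 2) * expR (z / 2).
  by rewrite -expRD; congr expR; field.
have h2 := expR_ge1Dx (z / 2).
rewrite h1 expr2; nra.
Qed.

Lemma fourth_unit (K : R) (hK : 0 < K) {d : nat} (Y : T -> 'I_d -> R)
  (u : 'I_d -> R) : random_vector Y -> subgaussian P K Y -> norm2 u = 1 ->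
  P.-integrable setT (EFin \o (fun w => dotv u (Y w) ^+ 4)) /\
  Rintegral P setT (fun w => dotv u (Y w) ^+ 4) <= 8 * K ^+ 4.
Proof.
move=> hY hs hu.
have my := mdot Y u hY.
have hE := hs u hu; rewrite EE in hE.
have mexp : measurable_fun setT (fun w => expR (dotv u (Y w) ^+ 2 / K ^+ 2)).
  apply: (measurableT_comp (f := expR)); first exact: measurable_realfun.measurable_expR.
  apply: measurable_realfun.measurable_funM; last exact: measurable_cst.
  exact: measurable_realfun.measurable_funX.
have m4 : measurable_fun setT (fun w => dotv u (Y w) ^+ 4).
  exact: measurable_realfun.measurable_funX.
have K4 : 0 < K ^+ 4 by rewrite exprn_gt0.
have pw : forall w, dotv u (Y w) ^+ 4 <= 4 * K ^+ 4 * expR (dotv u (Y w) ^+ 2 / K ^+ 2).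
  move=> w; set y := dotv u (Y w).
  have z0 : 0 <= y ^+ 2 / K ^+ 2 by rewrite divr_ge0 ?sqr_ge0 // ltW // exprn_gt0.
  have := exp_quad _ z0.
  have -> : (y ^+ 2 / K ^+ 2) ^+ 2 = y ^+ 4 / K ^+ 4.
    by rewrite expr_div_n -!exprM.
  rewrite ler_pdivrMr // => h.
  by rewrite (_ : 4 * K ^+ 4 * _ = 4 * expR (y ^+ 2 / K ^+ 2) * K ^+ 4); last ring.
have p0 : forall w, 0 <= dotv u (Y w) ^+ 4.
  by move=> w; rewrite (_ : 4%N = (2 * 2)%N) // exprM sqr_ge0.
have hI : (\int[P]_w (dotv u (Y w) ^+ 4)%:E <= (8 * K ^+ 4)%:E)%E.
  apply: (@le_trans _ _ (\int[P]_w ((4 * K ^+ 4)%:E * (expR (dotv u (Y w) ^+ 2 / K ^+ 2))%:E))%E).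
    apply: ge0_le_integral => //.
    - by move=> w _; rewrite lee_fin.
    - exact/measurable_realfun.measurable_EFinP.
    - apply: emeasurable_funM; first exact: measurable_cst.
      exact/measurable_realfun.measurable_EFinP.
    - by move=> w _; rewrite -EFinM lee_fin.
  rewrite ge0_integralZl_EFin //.
  - rewrite (_ : 8 * K ^+ 4 = 4 * K ^+ 4 * 2); last by ring.
    rewrite [(_ * 2)%:E]EFinM; apply: lee_wpmul2l => //.
    by rewrite lee_fin mulr_ge0 // ltW.
  all: try (by move=> w _; rewrite lee_fin ltW // expR_gt0).
  all: try exact/measurable_realfun.measurable_EFinP.
  by rewrite mulr_ge0 // ltW.
have I0 : (0 <= \int[P]_w (dotv u (Y w) ^+ 4)%:E)%E.
  by apply: integral_ge0 => w _; rewrite lee_fin.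
have Ifin : (\int[P]_w (dotv u (Y w) ^+ 4)%:E < +oo)%E.
  exact: le_lt_trans hI (ltry _).
split.
  apply/integrableP; split; first exact/measurable_realfun.measurable_EFinP.
  rewrite (eq_integral (fun w => (dotv u (Y w) ^+ 4)%:E)) //.
  by move=> w _ /=; rewrite ger0_norm.
rewrite /Rintegral.
have : (\int[P]_w (dotv u (Y w) ^+ 4)%:E)%E \is a fin_num by rewrite ge0_fin_numE.
move=> /fineK hf; move: hI; rewrite -hf lee_fin; exact.
Qed.

Lemma dot_ge0 {d : nat} (w : 'I_d -> R) : 0 <= dotv w w.
Proof. by rewrite /dotv; apply: sumr_ge0 => j _; rewrite -expr2 sqr_ge0. Qed.

Lemma norm2_ge0 {d : nat} (w : 'I_d -> R) : 0 <= norm2 w.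
Proof. exact: sqrtr_ge0. Qed.

Lemma norm2_sq {d : nat} (w : 'I_d -> R) : norm2 w ^+ 2 = dotv w w.
Proof. by rewrite /norm2 sqr_sqrtr // dot_ge0. Qed.

Lemma norm2_eq0 {d : nat} (w : 'I_d -> R) : norm2 w = 0 -> forall x, dotv w x = 0.
Proof.
move=> h x.
have h0 : dotv w w = 0 by rewrite -norm2_sq h expr0n.
have hj : forall j, w j = 0.
  move=> j.
  have nn : forall i : 'I_d, true -> 0 <= w i * w i by move=> i _; rewrite -expr2 sqr_ge0.
  have := psumr_eq0P nn h0 (i := j) isT.
  by move/eqP; rewrite mulf_eq0 orbb => /eqP.
by rewrite /dotv big1 // => j _; rewrite hj mul0r.
Qed.

Lemma dot_scale {d : nat} (w x : 'I_d -> R) (c : R) :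
  dotv (fun j => w j / c) x = dotv w x / c.
Proof. by rewrite /dotv mulr_suml; apply: eq_bigr => j _; rewrite mulrAC. Qed.

Lemma dot_scale_self {d : nat} (w : 'I_d -> R) (c : R) :
  dotv (fun j => w j / c) (fun j => w j / c) = dotv w w / c ^+ 2.
Proof.
rewrite /dotv mulr_suml; apply: eq_bigr => j _.
by rewrite expr2 invfM; ring.
Qed.

Lemma unit_of {d : nat} (w : 'I_d -> R) : 0 < norm2 w ->
  norm2 (fun j => w j / norm2 w) = 1.
Proof.
move=> r0; rewrite /norm2 dot_scale_self -/(norm2 w) -norm2_sq divff ?sqrtr1 //.
by rewrite expf_neq0 // gt_eqF.
Qed.

Lemma fourth_gen (K : R) (hK : 0 < K) {d : nat} (Y : T -> 'I_d -> R)
  (w : 'I_d -> R) : random_vector Y -> subgaussian P K Y ->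
  P.-integrable setT (EFin \o (fun o => (dotv w (Y o) / norm2 w) ^+ 4)) /\
  Rintegral P setT (fun o => (dotv w (Y o) / norm2 w) ^+ 4) <= 8 * K ^+ 4.
Proof.
move=> hY hs.
have [r0|r0] := eqVneq (norm2 w) 0.
  have -> : (fun o => (dotv w (Y o) / norm2 w) ^+ 4) = (fun _ => 0 : R).
    by apply/funext => o; rewrite r0 invr0 mulr0 expr0n.
  split; first exact: integrable0.
  by rewrite Rint0 mulr_ge0 // ltW // exprn_gt0.
have rp : 0 < norm2 w by rewrite lt0r r0 norm2_ge0.
have -> : (fun o => (dotv w (Y o) / norm2 w) ^+ 4) =
          (fun o => dotv (fun j => w j / norm2 w) (Y o) ^+ 4).
  by apply/funext => o; rewrite dot_scale.
have := (fourth_unit _ hK _ (fun j => w j / norm2 w) hY hs); apply; exact: unit_of.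
Qed.

Lemma second_gen {d : nat} (Y : T -> 'I_d -> R) (w : 'I_d -> R) :
  random_vector Y -> cov_identity P Y -> 0 < norm2 w ->
  P.-integrable setT (EFin \o (fun o => (dotv w (Y o) / norm2 w) ^+ 2)) /\
  Rintegral P setT (fun o => (dotv w (Y o) / norm2 w) ^+ 2) = 1.
Proof.
move=> hY hc rp.
have -> : (fun o => (dotv w (Y o) / norm2 w) ^+ 2) =
          (fun o => dotv (fun j => w j / norm2 w) (Y o) ^+ 2).
  by apply/funext => o; rewrite dot_scale.
have [h1 h2] := second_moment Y (fun j => w j / norm2 w) hY hc.
split => //; rewrite h2 -norm2_sq unit_of // expr1n. by [].
Qed.

End meas.

Section meas2.
Context {dT : measure_display} {T : measurableType dT} {R : realType}
  (P : probability T R).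

Lemma intD (f g : T -> R) : P.-integrable setT (EFin \o f) ->
  P.-integrable setT (EFin \o g) -> P.-integrable setT (EFin \o (fun w => f w + g w)).
Proof.
move=> hf hg.
rewrite (_ : _ \o _ = ((EFin \o f) \+ (EFin \o g))%E); first exact: integrableD.
by apply/funext.
Qed.

Lemma intB (f g : T -> R) : P.-integrable setT (EFin \o f) ->
  P.-integrable setT (EFin \o g) -> P.-integrable setT (EFin \o (fun w => f w - g w)).
Proof.
move=> hf hg.
rewrite (_ : _ \o _ = ((EFin \o f) \- (EFin \o g))%E); first exact: integrableB.
by apply/funext.
Qed.

Lemma lin3 (f1 f2 f3 : T -> R) (c1 c2 : R) :
  P.-integrable setT (EFin \o f1) -> P.-integrable setT (EFin \o f2) ->
  P.-integrable setT (EFin \o f3) ->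
  P.-integrable setT (EFin \o (fun w => c1 * (f1 w - (f2 w + f3 w) / c2))) /\
  Rintegral P setT (fun w => c1 * (f1 w - (f2 w + f3 w) / c2)) =
  c1 * (Rintegral P setT f1 - (Rintegral P setT f2 + Rintegral P setT f3) / c2).
Proof.
move=> h1 h2 h3.
have h23 := intD _ _ h2 h3.
have h23c := intZr P _ (c2^-1) h23.
have hin := intB _ _ h1 h23c.
split; first exact: (intZ P).
rewrite RintegralZl //.
rewrite (RintegralB _ (f1 := f1) (f2 := fun w => (f2 w + f3 w) / c2)) //.
rewrite (RintegralZr _ (f := fun w => f2 w + f3 w)) //.
by rewrite RintegralD.
Qed.

Lemma per_i (K : R) (hK : 0 < K) {d : nat} (Y : T -> 'I_d -> R)
  (v al : 'I_d -> R) :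
  random_vector Y -> cov_identity P Y -> subgaussian P K Y ->
  P.-integrable setT (EFin \o (fun w => bfun (dotv al (Y w)) * dotv v (Y w) ^+ 2)) /\
  norm2 v ^+ 2 * expR (- (4 * K ^+ 2 * norm2 al)) / 8 <=
  Rintegral P setT (fun w => bfun (dotv al (Y w)) * dotv v (Y w) ^+ 2).
Proof.
move=> hY hc hs.
have [i2 _] := second_moment P Y v hY hc.
have mb : measurable_fun setT (fun w => bfun (dotv al (Y w))).
  apply: (measurableT_comp (f := fun t => bfun t)); last exact: mdot.
  exact: measurable_realfun.continuous_measurable_fun bfun_cont.
have mf : measurable_fun setT (fun w => bfun (dotv al (Y w)) * dotv v (Y w) ^+ 2).
  apply: measurable_realfun.measurable_funM => //.
  by apply: measurable_realfun.measurable_funX; exact: mdot.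
have hint : P.-integrable setT
    (EFin \o (fun w => bfun (dotv al (Y w)) * dotv v (Y w) ^+ 2)).
  apply: (int_dom P _ _ mf i2) => w.
  have := bfun_bounds (dotv al (Y w)) => /andP[b0 b1].
  rewrite normrM ger0_norm // ler_piMl //.
split => //.
have [r0|r0] := eqVneq (norm2 v) 0.
  rewrite r0 expr0n /= !mul0r; apply: Rintegral_ge0 => w _.
  have := bfun_bounds (dotv al (Y w)) => /andP[b0 b1].
  by rewrite mulr_ge0 // sqr_ge0.
have rp : 0 < norm2 v by rewrite lt0r r0 norm2_ge0.
have [ib2 Rb2] := second_gen P Y v hY hc rp.
have [ib4 Rb4] := fourth_gen P K hK Y v hY hs.
have [ia4 Ra4] := fourth_gen P K hK Y al hY hs.
pose E := expR (- (4 * K ^+ 2 * norm2 al)).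
pose M := 4 * K ^+ 2.
have E0 : 0 < E by exact: expR_gt0.
have K2 : 0 < K ^+ 2 by rewrite exprn_gt0.
have M0 : 0 < M by rewrite /M mulr_gt0.
have [ig Rg] := lin3 _ _ _ (E / 4) (2 * M ^+ 2) ib2 ib4 ia4.
have ha : forall w, dotv al (Y w) = norm2 al * (dotv al (Y w) / norm2 al).
  move=> w; have [s0|s0] := eqVneq (norm2 al) 0.
    by rewrite s0 mul0r norm2_eq0.
  by rewrite mulrC divfK.
have hb : forall w, dotv v (Y w) = norm2 v * (dotv v (Y w) / norm2 v).
  by move=> w; rewrite mulrC divfK.
apply: (@le_trans _ _ (Rintegral P setT (fun w => norm2 v ^+ 2 *
   (E / 4 * ((dotv v (Y w) / norm2 v) ^+ 2 -
     ((dotv v (Y w) / norm2 v) ^+ 4 + (dotv al (Y w) / norm2 al) ^+ 4) / (2 * M ^+ 2)))))).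
  rewrite RintegralZl // Rg Rb2.
  set X4 := Rintegral P setT _ in Rb4 *.
  set A4 := Rintegral P setT _ in Ra4 *.
  have hM : M ^+ 2 = 16 * K ^+ 4 by rewrite /M; ring.
  have hq : (X4 + A4) / (2 * M ^+ 2) <= 1 / 2.
    rewrite ler_pdivrMr ?mulr_gt0 ?exprn_gt0 // hM.
    lra.
  rewrite -/E.
  have r2 : 0 < norm2 v ^+ 2 by rewrite exprn_gt0.
  rewrite -mulrA ler_pM2l //.
  have : E / 8 <= E / 4 * (1 - (X4 + A4) / (2 * M ^+ 2)).
    have : E / 4 * (1 - 1 / 2) <= E / 4 * (1 - (X4 + A4) / (2 * M ^+ 2)).
      rewrite ler_pM2l ?divr_gt0 //; lra.
    have -> : E / 4 * (1 - 1 / 2) = E / 8 by field.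
    done.
  done.
apply: le_Rintegral => //; first exact: (intZ P).
move=> w _.
have eR : bfun (dotv al (Y w)) * dotv v (Y w) ^+ 2 = norm2 v ^+ 2 *
   (bfun (norm2 al * (dotv al (Y w) / norm2 al)) * (dotv v (Y w) / norm2 v) ^+ 2).
  by rewrite -(ha w); field.
rewrite eR.
have := key_pointwise (norm2 al) M (dotv al (Y w) / norm2 al) (dotv v (Y w) / norm2 v)
   (norm2_ge0 al) M0.
rewrite -/M -/E => h.
have r2 : 0 <= norm2 v ^+ 2 by rewrite sqr_ge0.
by apply: ler_wpM2l.
Qed.

End meas2.

Theorem mainTheorem18 (R : realType) (K : R) (hK : 0 < K) :
  exists c C : R, 0 < c /\ 0 < C /\
  forall (dT : measure_display) (T : measurableType dT)
         (P : probability T R) (n d : nat) (X : 'I_n -> T -> 'I_d -> R),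
    iid_rvecs P X ->
    (forall i, mean_zero P (X i)) ->
    (forall i, cov_identity P (X i)) ->
    (forall i, subgaussian P K (X i)) ->
    forall alpha : 'I_d -> R,
      loewner_ge (expected_hessian P X alpha)
                 ((n%:R * c * expR (- (C * norm2 alpha))) *: 1%:M).
Proof.
exists (1 / 8), (4 * K ^+ 2); split; first lra.
split; first by rewrite mulr_gt0 // exprn_gt0.
move=> dT T P n d X [hrv _] _ hc hs al v.
set A := expected_hessian P X al.
set c' := n%:R * (1 / 8) * expR (- (4 * K ^+ 2 * norm2 al)).
have eq1 : \sum_(j < d) \sum_(k < d) v j * (A - c' *: 1%:M) j k * v k =
   \sum_(j < d) \sum_(k < d) v j * A j k * v k - c' * dotv v v.
  rewrite /dotv mulr_sumr -sumrB; apply: eq_bigr => j _.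
  have -> : \sum_(k < d) v j * (A - c' *: 1%:M) j k * v k =
      \sum_(k < d) v j * A j k * v k - \sum_(k < d) v j * (c' * (j == k)%:R) * v k.
    rewrite -sumrB; apply: eq_bigr => k _; rewrite !mxE; ring.
  congr (_ - _).
  rewrite (bigD1 j) //= eqxx big1 ?addr0; first by rewrite mulr1; ring.
  by move=> k /negbTE; rewrite eq_sym => ->; rewrite mulr0 mulr0 mul0r.
pose F := fun (j k : 'I_d) (w : T) =>
  \sum_(i < n) bfun (dotv al (X i w)) * X i w j * X i w k.
have hA : forall j k, A j k = Rintegral P setT (F j k).
  move=> j k; rewrite /A mxE /Rintegral EE; congr fine.
  by apply: eq_integral => w _; rewrite mxE.
have hF : forall j k, P.-integrable setT (EFin \o F j k).
  move=> j k; apply: integrable_sumR => i.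
  apply: (int_dom P _ (fun w => X i w j * X i w k)).
  - apply: measurable_realfun.measurable_funM; last exact: hrv.
    apply: measurable_realfun.measurable_funM; last exact: hrv.
    apply: (measurableT_comp (f := fun t => bfun t)); last exact: mdot.
    exact: measurable_realfun.continuous_measurable_fun bfun_cont.
  - exact: cov_int.
  - move=> w; have := bfun_bounds (dotv al (X i w)) => /andP[b0 b1].
    by rewrite -mulrA normrM ger0_norm // ler_piMl.
have eq2 : \sum_(j < d) \sum_(k < d) v j * A j k * v k =
   \sum_(i < n) Rintegral P setT
      (fun w => bfun (dotv al (X i w)) * dotv v (X i w) ^+ 2).
  under eq_bigr do under eq_bigr do rewrite hA.
  rewrite Rint_quad //.
  rewrite -Rint_sum; last by move=> i; have [h _] := per_i P K hK (X i) v al (hrv i) (hc i) (hs i).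
  congr Rintegral; apply/funext => w.
  rewrite /F.
  under eq_bigr do under eq_bigr do rewrite mulr_sumr mulr_suml.
  under eq_bigr do rewrite exchange_big /=.
  rewrite exchange_big /=; apply: eq_bigr => i _.
  rewrite -quad_id mulr_sumr; apply: eq_bigr => j _.
  rewrite mulr_sumr; apply: eq_bigr => k _; ring.
rewrite /loewner_ge /psd -/A eq1 eq2.
have lb : \sum_(i < n) (norm2 v ^+ 2 * expR (- (4 * K ^+ 2 * norm2 al)) / 8) <=
   \sum_(i < n) Rintegral P setT
      (fun w => bfun (dotv al (X i w)) * dotv v (X i w) ^+ 2).
  apply: ler_sum => i _.
  by have [_ h] := per_i P K hK (X i) v al (hrv i) (hc i) (hs i).
rewrite sumr_const card_ord norm2_sq -[X in X <= _]mulr_natr in lb.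
rewrite /c'.
have e : dotv v v * expR (- (4 * K ^+ 2 * norm2 al)) / 8 * n%:R =
  n%:R * (1 / 8) * expR (- (4 * K ^+ 2 * norm2 al)) * dotv v v by ring.
lra.
Qed.
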